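(* Let $p$ and $q$ be integers with $p$ odd and $q$ positive, and let $\omega=e^{i\pi p/q}$. Then $$\gamma(\omega)=\sum_{j=1}^{q}\omega^{j-1}\left(D_{j,q}+E_{j,p,q}\right),$$ where $$E_{j,p,q}=\log\frac{\Gamma\left(\frac{j+1}{2q}\right)\Gamma\left(\frac{j+q}{2q}\right)}{\Gamma\left(\frac{j}{2q}\right)\Gamma\left(\frac{j+q+1}{2q}\right)},\qquad D_{j,q}=\frac{1}{2q}\left[\psi\!\left(\frac12+\frac{j}{2q}\right)-\psi\!\left(\frac{j}{2q}\right)\right].$$
   Context: $\gamma(z)=\sum_{n=1}^{\infty} z^{n-1}\left(\frac{1}{n}-\log\frac{n+1}{n}\right)$ for $|z|\le1$. $\Gamma$ is Euler's gamma function and $\psi=\Gamma'/\Gamma$ is the digamma function. *)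

(* Defs.v *)
From Stdlib Require Import Reals ZArith.
From Coquelicot Require Import Coquelicot.
Open Scope R_scope.

Definition Gamma (x : R) : R :=
  RInt_gen (fun t => Rpower t (x - 1) * exp (- t))
           (at_right 0) (Rbar_locally p_infty).

Definition digamma (x : R) : R := Derive Gamma x / Gamma x.

(* k-th term (k = n-1, n >= 1) of the power series
   gamma(z) = sum_{n>=1} z^(n-1) (1/n - log((n+1)/n)) *)
Definition gamma_coef (n : nat) : R :=
  / INR n - ln (INR (n + 1) / INR n).

Definition gamma_term (z : C) (k : nat) : C :=
  Cmult (pow_n (K := C_Ring) z k) (RtoC (gamma_coef (S k))).

(* gamma(z) is the value of this power series (absolutely convergent for |z|<=1) *)
Definition gamma_fun_is (z v : C) : Prop := is_series (gamma_term z) v.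

Definition omega (p q : Z) : C :=
  (cos (PI * IZR p / IZR q), sin (PI * IZR p / IZR q)).

Definition E_jq (j q : nat) : R :=
  ln ((Gamma (INR (j + 1) / (2 * INR q)) * Gamma (INR (j + q) / (2 * INR q)))
      / (Gamma (INR j / (2 * INR q)) * Gamma (INR (j + q + 1) / (2 * INR q)))).

Definition D_jq (j q : nat) : R :=
  / (2 * INR q) * (digamma (/ 2 + INR j / (2 * INR q)) - digamma (INR j / (2 * INR q))).

(* Main.v *)
Require Import Defs.
From Stdlib Require Import Reals ZArith Lra Lia.
From Coquelicot Require Import Coquelicot.
Open Scope R_scope.

Lemma ln_le_sub1 y : 0 < y -> ln y <= y - 1.
Proof. intros Hy. pose proof (exp_ineq1_le (ln y)) as H. rewrite exp_ln in H; lra. Qed.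

Lemma ln_diff_bounds y : 0 < y -> / (y+1) <= ln (y+1) - ln y <= / y.
Proof.
  intros Hy. split.
  - pose proof (ln_le_sub1 (y/(y+1))) as H.
    rewrite ln_div in H by lra.
    assert (y / (y+1) - 1 = - / (y+1)) by (field; lra).
    assert (0 < y / (y+1)) by (apply Rdiv_lt_0_compat; lra). lra.
  - pose proof (ln_le_sub1 ((y+1)/y)) as H.
    rewrite ln_div in H by lra.
    assert ((y+1) / y - 1 = / y) by (field; lra).
    assert (0 < (y+1) / y) by (apply Rdiv_lt_0_compat; lra). lra.
Qed.

Lemma ball_R (y e z : R) : ball y e z <-> Rabs (z - y) < e.
Proof. reflexivity. Qed.

Section GenInt.
Variable f : R -> R.
Hypothesis fcont : forall t, 0 < t -> continuous f t.
Hypothesis fpos : forall t, 0 < t -> 0 <= f t.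

Lemma exRI a b : 0 < a -> 0 < b -> ex_RInt f a b.
Proof.
  intros Ha Hb. apply (ex_RInt_continuous (V:=R_CompleteNormedModule)). intros z Hz. apply fcont.
  destruct Hz as [Hz _]. unfold Rmin in Hz. destruct (Rle_dec a b); lra.
Qed.

Lemma RInt_mono a' a b b' : 0 < a' -> a' <= a -> a <= b -> b <= b' ->
  RInt f a b <= RInt f a' b'.
Proof.
  intros H1 H2 H3 H4.
  rewrite <- (RInt_Chasles f a' a b') by (apply exRI; lra).
  rewrite <- (RInt_Chasles f a b b') by (apply exRI; lra).
  assert (0 <= RInt f a' a).
  { apply RInt_ge_0; auto. apply exRI; lra. intros; apply fpos; lra. }
  assert (0 <= RInt f b b').
  { apply RInt_ge_0; auto. apply exRI; lra. intros; apply fpos; lra. }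
  change plus with Rplus. lra.
Qed.

Variable B : R.
Hypothesis fbound : forall a b, 0 < a -> a <= 1 -> 1 <= b -> RInt f a b <= B.

Lemma gen_exists : exists S, is_RInt_gen f (at_right 0) (Rbar_locally p_infty) S
  /\ (forall a b, 0 < a -> a <= b -> RInt f a b <= S).
Proof.
  set (E := fun v => exists a b, 0 < a <= 1 /\ 1 <= b /\ v = RInt f a b).
  assert (bE : bound E).
  { exists B. intros v [a [b [Ha [Hb ->]]]]. apply fbound; lra. }
  assert (nE : exists v, E v).
  { exists (RInt f 1 1). exists 1, 1. repeat split; lra. }
  destruct (completeness E bE nE) as [S [HS1 HS2]].
  assert (Hle : forall a b, 0 < a -> a <= b -> RInt f a b <= S).
  { intros a b Ha Hab. apply Rle_trans with (RInt f (Rmin a 1) (Rmax b 1)).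
    apply RInt_mono; unfold Rmin, Rmax; destruct (Rle_dec a 1); destruct (Rle_dec b 1); lra.
    apply HS1. exists (Rmin a 1), (Rmax b 1).
    unfold Rmin, Rmax; destruct (Rle_dec a 1); destruct (Rle_dec b 1); repeat split; lra. }
  exists S. split; [|exact Hle].
  apply filterlimi_lim_ext_loc with (f := fun ab => RInt f (fst ab) (snd ab)).
  - apply Filter_prod with (Q := fun a => 0 < a) (R := fun b => 0 < b).
    + exists (mkposreal 1 Rlt_0_1). intros; auto.
    + exists 0. auto.
    + intros a b Ha Hb. simpl. apply (RInt_correct (V:=R_CompleteNormedModule)). apply exRI; auto.
  - apply filterlim_locally. intros eps.
    assert (exists v, E v /\ S - eps < v) as [v [[a1 [b1 [Ha1 [Hb1 ->]]]] Hv]].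
    { apply Classical_Pred_Type.not_all_not_ex. intros Hn.
      assert (S <= S - eps). { apply HS2. intros v Ev. destruct (Rle_dec v (S - eps)); auto.
        exfalso. apply (Hn v). split; auto. lra. }
      destruct eps; simpl in *; lra. }
    apply Filter_prod with (Q := fun a => 0 < a < a1) (R := fun b => b1 < b).
    + exists (mkposreal a1 (proj1 Ha1)). intros y Hy Hy0. split; auto.
      change (Rabs (y - 0) < a1) in Hy. rewrite Rminus_0_r, Rabs_pos_eq in Hy; lra.
    + exists b1. auto.
    + intros a b Ha Hb. apply ball_R. simpl.
      assert (RInt f a1 b1 <= RInt f a b) by (apply RInt_mono; lra).
      assert (RInt f a b <= S) by (apply Hle; lra).
      rewrite Rabs_left1 by lra. lra.
Qed.
End GenInt.

Lemma exd_cont (f : R -> R) x : ex_derive f x -> continuous f x.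
Proof. intros H. exact (ex_derive_continuous (K:=R_AbsRing) (V:=R_NormedModule) f x H). Qed.

Definition fx (x t : R) := Rpower t (x - 1) * exp (- t).

Lemma fx_pos x t : 0 < fx x t.
Proof. unfold fx, Rpower. apply Rmult_lt_0_compat; apply exp_pos. Qed.

Lemma fx_cont x t : 0 < t -> continuous (fx x) t.
Proof.
  intros Ht. apply exd_cont. unfold fx, Rpower. auto_derive. lra.
Qed.

Lemma RInt_pow_bound x a : 0 < x -> 0 < a <= 1 ->
  RInt (fun t => exp ((x-1) * ln t)) a 1 <= / x.
Proof.
  intros Hx Ha.
  assert (H : is_RInt (fun t => exp ((x-1) * ln t)) a 1
     (minus (exp (x * ln 1) / x) (exp (x * ln a) / x))).
  { apply (is_RInt_derive (V:=R_CompleteNormedModule) (fun t => exp (x * ln t) / x)).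
    - intros t Ht. unfold Rmin, Rmax in Ht. destruct (Rle_dec a 1); try lra.
      auto_derive. lra.
      replace ((x - 1) * ln t) with (x * ln t + - ln t) by ring.
      rewrite exp_plus, exp_Ropp, exp_ln by lra. field. split; lra.
    - intros t Ht. unfold Rmin, Rmax in Ht. destruct (Rle_dec a 1); try lra.
      apply exd_cont. auto_derive. lra. }
  apply (is_RInt_unique (V:=R_CompleteNormedModule)) in H. rewrite H.
  unfold minus, plus, opp; simpl. rewrite ln_1, Rmult_0_r, exp_0.
  assert (0 < exp (x * ln a) / x) by (apply Rdiv_lt_0_compat; [apply exp_pos|lra]).
  unfold Rdiv in *. lra.
Qed.

Lemma RInt_expm_bound M b : 0 <= M -> 1 <= b ->
  RInt (fun t => M * exp (- t / 2)) 1 b <= 2 * M.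
Proof.
  intros HM Hb.
  assert (H : is_RInt (fun t => M * exp (- t / 2)) 1 b
     (minus (-2 * M * exp (- b / 2)) (-2 * M * exp (- 1 / 2)))).
  { apply (is_RInt_derive (V:=R_CompleteNormedModule) (fun t => -2 * M * exp (- t / 2))).
    - intros t Ht. auto_derive. auto. unfold Rdiv; field.
    - intros t Ht. apply exd_cont. auto_derive. auto. }
  apply (is_RInt_unique (V:=R_CompleteNormedModule)) in H. rewrite H.
  unfold minus, plus, opp; simpl.
  assert (exp (- 1 / 2) <= 1).
  { rewrite <- exp_0. apply Rlt_le, exp_increasing. lra. }
  pose proof (exp_pos (- b/2)). nra.
Qed.

Lemma exp_le_m x y : x <= y -> exp x <= exp y.
Proof. intros H. destruct (Req_dec x y). subst; lra. apply Rlt_le, exp_increasing; lra. Qed.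

Definition Mx (x : R) := exp (Rabs (x - 1) * ln (2 * Rabs (x - 1) + 2)).

Lemma fx_tail x t : 1 <= t -> fx x t <= Mx x * exp (- t / 2).
Proof.
  intros Ht. unfold fx, Mx, Rpower. rewrite <- !exp_plus.
  apply exp_le_m.
  set (r := Rabs (x - 1)). set (K := 2 * r + 2).
  assert (Hr : 0 <= r) by apply Rabs_pos.
  assert (Hr2 : x - 1 <= r) by apply Rle_abs.
  assert (HK : 0 < K) by (unfold K; lra).
  assert (Hl : 0 <= ln t).
  { rewrite <- ln_1. apply ln_le; lra. }
  pose proof (ln_le_sub1 (t / K) ltac:(apply Rdiv_lt_0_compat; lra)) as H1. rewrite ln_div in H1 by lra.
  set (u := t / K) in *.
  assert (Hu : t = u * K) by (unfold u; field; lra).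
  assert ((x - 1) * ln t <= r * ln t) by nra.
  assert (r * ln t <= r * (ln K + u - 1)) by (apply Rmult_le_compat_l; lra).
  assert (r * u <= t / 2).
  { assert (0 <= u) by (unfold u; apply Rcomplements.Rdiv_le_0_compat; lra).
    assert (t / 2 = u * r + u) by (rewrite Hu; unfold K; field). nra. }
  nra.
Qed.

Lemma fx_bound x : 0 < x -> forall a b, 0 < a -> a <= 1 -> 1 <= b ->
  RInt (fx x) a b <= / x + 2 * Mx x.
Proof.
  intros Hx a b Ha Ha1 Hb.
  rewrite <- (RInt_Chasles (V:=R_CompleteNormedModule) (fx x) a 1 b)
    by (apply (exRI (fx x) (fx_cont x)); lra).
  change plus with Rplus.
  assert (RInt (fx x) a 1 <= / x).
  { eapply Rle_trans; [|apply (RInt_pow_bound x a); lra].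
    apply RInt_le; auto.
    - apply (exRI (fx x) (fx_cont x)); lra.
    - apply (ex_RInt_continuous (V:=R_CompleteNormedModule)). intros z Hz.
      unfold Rmin in Hz. destruct (Rle_dec a 1); try lra.
      apply exd_cont. auto_derive. lra.
    - intros t Ht. unfold fx, Rpower.
      pose proof (exp_pos ((x - 1) * ln t)).
      assert (exp (- t) <= 1) by (rewrite <- exp_0; apply Rlt_le, exp_increasing; lra).
      nra. }
  assert (RInt (fx x) 1 b <= 2 * Mx x).
  { eapply Rle_trans; [|apply (RInt_expm_bound (Mx x) b); auto].
    apply RInt_le; auto.
    - apply (exRI (fx x) (fx_cont x)); lra.
    - apply (ex_RInt_continuous (V:=R_CompleteNormedModule)). intros z Hz.
      apply exd_cont. auto_derive. auto.
    - intros t Ht. apply fx_tail. lra.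
    - unfold Mx. left. apply exp_pos. }
  lra.
Qed.

Lemma Gamma_spec x : 0 < x ->
  is_RInt_gen (fx x) (at_right 0) (Rbar_locally p_infty) (Gamma x) /\
  (forall a b, 0 < a -> a <= b -> RInt (fx x) a b <= Gamma x).
Proof.
  intros Hx.
  destruct (gen_exists (fx x) (fx_cont x) (fun t _ => Rlt_le _ _ (fx_pos x t))
     (/ x + 2 * Mx x) (fx_bound x Hx)) as [S [HS1 HS2]].
  assert (E : Gamma x = S).
  { unfold Gamma. change (RInt_gen (fx x) (at_right 0) (Rbar_locally p_infty) = S).
    apply (is_RInt_gen_unique (V:=R_CompleteNormedModule)). exact HS1. }
  rewrite E. split; auto.
Qed.

Lemma Gamma_pos x : 0 < x -> 0 < Gamma x.
Proof.
  intros Hx. destruct (Gamma_spec x Hx) as [_ H].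
  eapply Rlt_le_trans; [|apply (H 1 2); lra].
  apply RInt_gt_0. lra. intros; apply fx_pos. intros; apply fx_cont; lra.
Qed.

Section Rec.
Variable x : R.
Hypothesis Hx : 0 < x.

Let F t := - (exp (x * ln t) * exp (- t)).
Let g t := fx (x + 1) t - x * fx x t.

Lemma F_der t : 0 < t -> is_derive F t (g t).
Proof.
  intros Ht. unfold F, g, fx, Rpower. auto_derive. lra.
  replace (x + 1 - 1) with x by ring.
  replace ((x - 1) * ln t) with (x * ln t + - ln t) by ring.
  rewrite exp_plus. rewrite (exp_Ropp (ln t)), exp_ln by lra. field.
  all: repeat split. all: apply Rgt_not_eq; first [lra | apply exp_pos].
Qed.

Lemma F_lim0 : filterlim F (at_right 0) (locally 0).
Proof.
  apply filterlim_locally. intros eps.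
  assert (Hd : 0 < exp (ln eps / x)) by apply exp_pos.
  exists (mkposreal _ Hd). intros t Ht Ht0.
  change (Rabs (t - 0) < exp (ln eps / x)) in Ht.
  rewrite Rminus_0_r, Rabs_pos_eq in Ht by lra.
  change (Rabs (F t - 0) < eps). unfold F. rewrite Rminus_0_r, Rabs_Ropp.
  rewrite Rabs_pos_eq by (apply Rlt_le, Rmult_lt_0_compat; apply exp_pos).
  assert (ln t < ln eps / x) by (rewrite <- (ln_exp (ln eps / x)); apply ln_increasing; lra).
  assert (x * ln t < ln eps).
  { apply Rmult_lt_compat_l with (r := x) in H; auto.
    replace (x * (ln eps / x)) with (ln eps) in H by (field; lra). auto. }
  assert (exp (x * ln t) < eps).
  { rewrite <- (exp_ln eps) by (destruct eps; simpl; lra). apply exp_increasing; auto. }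
  assert (exp (- t) <= 1) by (rewrite <- exp_0; apply exp_le_m; lra).
  pose proof (exp_pos (x * ln t)). pose proof (exp_pos (- t)). nra.
Qed.

Lemma F_liminf : filterlim F (Rbar_locally p_infty) (locally 0).
Proof.
  apply filterlim_locally. intros eps.
  set (M := Mx (x + 1)).
  assert (HM : 0 < M) by apply exp_pos.
  assert (He : 0 < eps) by (destruct eps; auto).
  exists (Rmax 1 (2 * (ln M - ln eps))). intros t Ht.
  pose proof (Rmax_l 1 (2 * (ln M - ln eps))). pose proof (Rmax_r 1 (2 * (ln M - ln eps))).
  assert (Ht1 : 1 <= t) by lra.
  assert (Ht2 : 2 * (ln M - ln eps) < t) by lra.
  change (Rabs (F t - 0) < eps). unfold F. rewrite Rminus_0_r, Rabs_Ropp.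
  rewrite Rabs_pos_eq by (apply Rlt_le, Rmult_lt_0_compat; apply exp_pos).
  pose proof (fx_tail (x + 1) t Ht1) as Hf. unfold fx, Rpower in Hf.
  replace (x + 1 - 1) with x in Hf by ring. fold M in Hf.
  eapply Rle_lt_trans; [exact Hf|].
  assert (Hl : exp (- t / 2) < exp (ln eps + - ln M)) by (apply exp_increasing; lra).
  rewrite exp_plus, exp_Ropp, !exp_ln in Hl by lra.
  apply Rmult_lt_compat_l with (r := M) in Hl; auto.
  replace (M * (eps * / M)) with (pos eps) in Hl by (field; lra). auto.
Qed.

Lemma Gamma_rec : Gamma (x + 1) = x * Gamma x.
Proof.
  assert (H1 : is_RInt_gen (Derive F) (at_right 0) (Rbar_locally p_infty) (0 - 0)).
  { apply is_RInt_gen_Derive.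
    - apply Filter_prod with (Q := fun a => 0 < a) (R := fun b => 0 < b).
      + exists (mkposreal 1 Rlt_0_1). intros; auto.
      + exists 0. auto.
      + intros a b Ha Hb y Hy. simpl in Hy. exists (g y). apply F_der.
        unfold Rmin in Hy. destruct (Rle_dec a b); lra.
    - apply Filter_prod with (Q := fun a => 0 < a) (R := fun b => 0 < b).
      + exists (mkposreal 1 Rlt_0_1). intros; auto.
      + exists 0. auto.
      + intros a b Ha Hb y Hy. simpl in Hy.
        assert (Hy0 : 0 < y) by (unfold Rmin in Hy; destruct (Rle_dec a b); lra).
        apply (continuous_ext_loc _ g).
        * assert (Hp : 0 < y / 2) by lra. exists (mkposreal _ Hp). intros z Hz.
          change (Rabs (z - y) < y / 2) in Hz.
          symmetry. apply is_derive_unique. apply F_der.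
          apply Rabs_def2 in Hz. lra.
        * apply exd_cont. unfold g, fx, Rpower. auto_derive. lra.
    - apply F_lim0.
    - apply F_liminf. }
  destruct (Gamma_spec (x + 1)) as [G1 _]; [lra|].
  destruct (Gamma_spec x Hx) as [G2 _].
  pose proof (is_RInt_gen_minus _ _ _ _ G1 (is_RInt_gen_scal _ x _ G2)) as H2. cbv beta in H2.
  apply is_RInt_gen_ext with (g := fun t => minus (fx (x + 1) t) (scal x (fx x t))) in H1.
  - apply (is_RInt_gen_unique (V:=R_CompleteNormedModule)) in H1.
    apply (is_RInt_gen_unique (V:=R_CompleteNormedModule)) in H2.
    assert (E : 0 - 0 = Gamma (x + 1) - x * Gamma x) by (rewrite <- H1; etransitivity; [|exact H2]; reflexivity).
    lra.
  - apply Filter_prod with (Q := fun a => 0 < a) (R := fun b => 0 < b).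
    + exists (mkposreal 1 Rlt_0_1). intros; auto.
    + exists 0. auto.
    + intros a b Ha Hb y Hy. simpl in Hy.
      assert (Hy0 : 0 < y) by (unfold Rmin in Hy; destruct (Rle_dec a b); lra).
      rewrite (is_derive_unique _ _ _ (F_der y Hy0)). reflexivity.
Qed.
End Rec.

Lemma amgm_exp th u v : 0 <= th <= 1 ->
  exp (th * u + (1 - th) * v) <= th * exp u + (1 - th) * exp v.
Proof.
  intros Hth. set (m := th * u + (1 - th) * v).
  assert (H1 : exp u >= exp m * (1 + (u - m))).
  { replace u with (m + (u - m)) at 1 by ring. rewrite exp_plus.
    pose proof (exp_ineq1_le (u - m)). pose proof (exp_pos m). nra. }
  assert (H2 : exp v >= exp m * (1 + (v - m))).
  { replace v with (m + (v - m)) at 1 by ring. rewrite exp_plus.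
    pose proof (exp_ineq1_le (v - m)). pose proof (exp_pos m). nra. }
  assert (H0 : th * (u - m) + (1 - th) * (v - m) = 0) by (unfold m; ring).
  assert (th * exp u >= th * (exp m * (1 + (u-m)))) by (apply Rmult_ge_compat_l; lra).
  assert ((1 - th) * exp v >= (1 - th) * (exp m * (1 + (v-m)))) by (apply Rmult_ge_compat_l; lra).
  assert (E : th*(exp m*(1+(u-m))) + (1-th)*(exp m*(1+(v-m))) = exp m).
  { transitivity (exp m * (1 + (th * (u - m) + (1 - th) * (v - m)))). ring. rewrite H0. ring. }
  lra.
Qed.

Lemma Gamma_logconv x y th : 0 < x -> 0 < y -> 0 < th < 1 ->
  ln (Gamma (th * x + (1 - th) * y)) <= th * ln (Gamma x) + (1 - th) * ln (Gamma y).
Proof.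
  intros Hx Hy Hth.
  set (z := th * x + (1 - th) * y).
  assert (Hz : 0 < z) by (unfold z; nra).
  set (Lx := ln (Gamma x)). set (Ly := ln (Gamma y)).
  set (c1 := exp ((1 - th) * (Ly - Lx))). set (c2 := exp (- th * (Ly - Lx))).
  destruct (Gamma_spec z Hz) as [Gz _].
  destruct (Gamma_spec x Hx) as [Gx _].
  destruct (Gamma_spec y Hy) as [Gy _].
  pose proof (is_RInt_gen_plus _ _ _ _ (is_RInt_gen_scal _ (th * c1) _ Gx)
      (is_RInt_gen_scal _ ((1 - th) * c2) _ Gy)) as Gs. cbv beta in Gs.
  assert (Hle : norm (Gamma z) <= plus (scal (th*c1) (Gamma x)) (scal ((1-th)*c2) (Gamma y))).
  { refine (RInt_gen_norm (V:=R_CompleteNormedModule) (Fa:=at_right 0) (Fb:=Rbar_locally p_infty) (fx z) _ _ _ _ _ Gz Gs).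
    - apply Filter_prod with (Q := fun a => 0 < a < 1) (R := fun b => 1 < b).
      + exists (mkposreal 1 Rlt_0_1); intros w Hw Hw0; split; auto.
        change (Rabs (w - 0) < 1) in Hw. rewrite Rminus_0_r, Rabs_pos_eq in Hw; lra.
      + exists 1; auto.
      + intros a b Ha Hb; simpl; lra.
    - apply Filter_prod with (Q := fun a => 0 < a < 1) (R := fun b => 1 < b).
      + exists (mkposreal 1 Rlt_0_1); intros w Hw Hw0; split; auto.
        change (Rabs (w - 0) < 1) in Hw. rewrite Rminus_0_r, Rabs_pos_eq in Hw; lra.
      + exists 1; auto.
      + intros a b Ha Hb t Ht; simpl in Ht |- *.
        change (Rabs (fx z t) <= th * c1 * fx x t + (1 - th) * c2 * fx y t).
        rewrite Rabs_pos_eq by (apply Rlt_le, fx_pos).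
        set (u := (x - 1) * ln t + - t + (1 - th) * (Ly - Lx)).
        set (v := (y - 1) * ln t + - t + - th * (Ly - Lx)).
        assert (E0 : fx z t = exp (th * u + (1 - th) * v)).
        { unfold fx, Rpower. rewrite <- exp_plus. f_equal. unfold u, v, z. ring. }
        assert (E1 : c1 * fx x t = exp u).
        { unfold fx, Rpower, c1, u. rewrite <- !exp_plus. f_equal. ring. }
        assert (E2 : c2 * fx y t = exp v).
        { unfold fx, Rpower, c2, v. rewrite <- !exp_plus. f_equal. ring. }
        rewrite E0, Rmult_assoc, E1, Rmult_assoc, E2. apply amgm_exp. lra. }
  change (Rabs (Gamma z) <= th * c1 * Gamma x + (1 - th) * c2 * Gamma y) in Hle.
  assert (Ex : Gamma x = exp Lx) by (unfold Lx; rewrite exp_ln; auto; apply Gamma_pos; auto).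
  assert (Ey : Gamma y = exp Ly) by (unfold Ly; rewrite exp_ln; auto; apply Gamma_pos; auto).
  assert (Hm : th * c1 * Gamma x + (1 - th) * c2 * Gamma y = exp (th * Lx + (1 - th) * Ly)).
  { rewrite Ex, Ey. unfold c1, c2. rewrite !Rmult_assoc, <- !exp_plus.
    replace ((1 - th) * (Ly - Lx) + Lx) with (th * Lx + (1 - th) * Ly) by ring.
    replace (- th * (Ly - Lx) + Ly) with (th * Lx + (1 - th) * Ly) by ring. ring. }
  rewrite Hm in Hle.
  rewrite <- (ln_exp (th * Lx + (1 - th) * Ly)).
  apply ln_le. apply Gamma_pos; auto.
  eapply Rle_trans; [apply Rle_abs|exact Hle].
Qed.


Definition L (x : R) := ln (Gamma x).

Fixpoint ssum (f : nat -> R) (n : nat) : R :=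
  match n with O => 0 | S m => ssum f m + f m end.

Lemma L_rec x : 0 < x -> L (x + 1) = L x + ln x.
Proof.
  intros Hx. unfold L. rewrite Gamma_rec by auto. rewrite ln_mult; auto. ring.
  apply Gamma_pos; auto.
Qed.

Lemma L_sum x N : 0 < x -> L (x + INR N) = L x + ssum (fun k => ln (x + INR k)) N.
Proof.
  intros Hx. induction N.
  - simpl. rewrite Rplus_0_r. ring.
  - rewrite S_INR. simpl. replace (x + (INR N + 1)) with ((x + INR N) + 1) by ring.
    rewrite L_rec. rewrite IHN. ring. pose proof (pos_INR N). lra.
Qed.

Lemma chord p q r : 0 < p -> p < q -> q < r ->
  (L q - L p) / (q - p) <= (L r - L q) / (r - q).
Proof.
  intros Hp Hpq Hqr.
  set (th := (r - q) / (r - p)).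
  assert (Hth : 0 < th < 1).
  { unfold th. split. apply Rdiv_lt_0_compat; lra.
    apply Rmult_lt_reg_r with (r - p). lra. unfold Rdiv. rewrite Rmult_assoc, Rinv_l; lra. }
  assert (Eq : q = th * p + (1 - th) * r) by (unfold th; field; lra).
  pose proof (Gamma_logconv p r th Hp ltac:(lra) Hth) as H.
  rewrite <- Eq in H. fold (L q) (L p) (L r) in H.
  assert (th * (r - p) = r - q) by (unfold th; field; lra).
  apply Rmult_le_reg_r with ((q - p) * (r - q)). nra.
  replace ((L q - L p) / (q - p) * ((q - p) * (r - q))) with ((L q - L p) * (r - q)) by (field; lra).
  replace ((L r - L q) / (r - q) * ((q - p) * (r - q))) with ((L r - L q) * (q - p)) by (field; lra).
  assert (q - p = (1 - th) * (r - p)) by (rewrite Eq; ring).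
  nra.
Qed.

Lemma slope_bounds u v : 1 < u -> u < v ->
  ln (u - 1) <= (L v - L u) / (v - u) <= ln v.
Proof.
  intros Hu Huv. split.
  - pose proof (chord (u - 1) u v ltac:(lra) ltac:(lra) Huv) as H.
    replace (u - (u - 1)) with 1 in H by ring.
    replace u with ((u - 1) + 1) in H at 1 by ring. rewrite L_rec in H by lra.
    replace (L (u - 1) + ln (u - 1) - L (u - 1)) with (ln (u - 1)) in H by ring.
    lra.
  - pose proof (chord u v (v + 1) ltac:(lra) Huv ltac:(lra)) as H.
    replace (v + 1 - v) with 1 in H by ring.
    rewrite L_rec in H by lra.
    replace (L v + ln v - L v) with (ln v) in H by ring. lra.
Qed.

Lemma ln_lip u v : 0 < v <= u -> 0 <= ln u - ln v <= (u - v) / v.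
Proof.
  intros H. split.
  - assert (ln v <= ln u) by (apply ln_le; lra). lra.
  - pose proof (ln_le_sub1 (u / v) ltac:(apply Rdiv_lt_0_compat; lra)) as H1.
    rewrite ln_div in H1 by lra.
    replace (u / v - 1) with ((u - v) / v) in H1 by (field; lra). auto.
Qed.

Lemma ev_big (M : R) : eventually (fun n : nat => M < INR n).
Proof.
  pose proof is_lim_seq_INR as H. apply is_lim_seq_spec in H. apply H.
Qed.

Lemma lnshift c d : is_lim_seq (fun n => ln (INR n + c) - ln (INR n + d)) 0.
Proof.
  apply is_lim_seq_spec. intros eps.
  assert (He : 0 < eps) by (destruct eps; auto).
  generalize (filter_and _ _ (ev_big (2 * (Rabs c + Rabs d) + 1))
               (ev_big (2 * Rabs (c - d) / eps))).
  apply filter_imp. intros n [H1 H2].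
  rewrite Rminus_0_r.
  pose proof (Rle_abs c). pose proof (Rle_abs (- c)). rewrite Rabs_Ropp in *.
  pose proof (Rle_abs d). pose proof (Rle_abs (- d)). rewrite Rabs_Ropp in *.
  assert (Hn0 : 0 < INR n) by (pose proof (Rabs_pos c); pose proof (Rabs_pos d); lra).
  assert (Hc : INR n / 2 <= INR n + c) by lra.
  assert (Hd : INR n / 2 <= INR n + d) by lra.
  assert (Hb : Rabs (c - d) / (INR n / 2) < eps).
  { apply Rmult_lt_reg_r with (INR n / 2). lra.
    unfold Rdiv at 1. rewrite Rmult_assoc, Rinv_l by lra. rewrite Rmult_1_r.
    apply Rmult_lt_compat_l with (r := eps) in H2; auto.
    replace (eps * (2 * Rabs (c - d) / eps)) with (2 * Rabs (c - d)) in H2 by (field; lra).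
    lra. }
  destruct (Rle_dec d c).
  - pose proof (ln_lip (INR n + c) (INR n + d) ltac:(lra)) as Hl.
    rewrite Rabs_pos_eq by lra.
    eapply Rle_lt_trans; [|exact Hb].
    rewrite Rabs_pos_eq by lra.
    eapply Rle_trans. apply Hl. replace (INR n + c - (INR n + d)) with (c - d) by ring.
    unfold Rdiv. apply Rmult_le_compat_l. lra. apply Rinv_le_contravar; lra.
  - pose proof (ln_lip (INR n + d) (INR n + c) ltac:(lra)) as Hl.
    rewrite Rabs_left1 by lra.
    eapply Rle_lt_trans; [|exact Hb].
    rewrite Rabs_left1 by lra.
    replace (- (ln (INR n + c) - ln (INR n + d))) with (ln (INR n + d) - ln (INR n + c)) by ring.
    eapply Rle_trans. apply Hl. replace (INR n + d - (INR n + c)) with (- (c - d)) by ring.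
    unfold Rdiv. apply Rmult_le_compat_l. lra. apply Rinv_le_contravar; lra.
Qed.

Lemma asym x : 0 < x ->
  is_lim_seq (fun n => L (INR n + x) - L (INR n) - x * ln (INR n)) 0.
Proof.
  intros Hx.
  assert (Hlo : is_lim_seq (fun n => x * (ln (INR n + -1) - ln (INR n + 0))) 0).
  { pose proof (is_lim_seq_scal_l _ x _ (lnshift (-1) 0)) as H. simpl in H.
    rewrite Rmult_0_r in H. exact H. }
  assert (Hhi : is_lim_seq (fun n => x * (ln (INR n + x) - ln (INR n + 0))) 0).
  { pose proof (is_lim_seq_scal_l _ x _ (lnshift x 0)) as H. simpl in H.
    rewrite Rmult_0_r in H. exact H. }
  refine (is_lim_seq_le_le_loc _ _ _ 0 _ Hlo Hhi).
  generalize (ev_big 2). apply filter_imp. intros n Hn.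
  rewrite Rplus_0_r.
  pose proof (slope_bounds (INR n) (INR n + x) ltac:(lra) ltac:(lra)) as [H1 H2].
  replace (INR n + x - INR n) with x in H1, H2 by ring.
  assert (H1' : x * ln (INR n - 1) <= L (INR n + x) - L (INR n)).
  { apply Rmult_le_compat_l with (r := x) in H1; [|lra].
    replace (x * ((L (INR n + x) - L (INR n)) / x)) with (L (INR n + x) - L (INR n)) in H1 by (field; lra).
    exact H1. }
  assert (H2' : L (INR n + x) - L (INR n) <= x * ln (INR n + x)).
  { apply Rmult_le_compat_l with (r := x) in H2; [|lra].
    replace (x * ((L (INR n + x) - L (INR n)) / x)) with (L (INR n + x) - L (INR n)) in H2 by (field; lra).
    exact H2. }
  replace (INR n + -1) with (INR n - 1) by ring.
  split; nra.
Qed.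

Lemma ssum_ext f g n : (forall k, f k = g k) -> ssum f n = ssum g n.
Proof. intros H. induction n; simpl; auto. rewrite IHn, H. auto. Qed.
Lemma ssum_plus f g n : ssum (fun k => f k + g k) n = ssum f n + ssum g n.
Proof. induction n; simpl. ring. rewrite IHn. ring. Qed.
Lemma ssum_minus f g n : ssum (fun k => f k - g k) n = ssum f n - ssum g n.
Proof. induction n; simpl. ring. rewrite IHn. ring. Qed.
Lemma ssum_scal c f n : ssum (fun k => c * f k) n = c * ssum f n.
Proof. induction n; simpl. ring. rewrite IHn. ring. Qed.

Lemma Elim a b c d : 0 < a -> 0 < b -> 0 < c -> 0 < d -> c - d - a + b = 0 ->
  is_lim_seq (fun K => ssum (fun m => ln (c + INR m) - ln (d + INR m)
                                      - ln (a + INR m) + ln (b + INR m)) K)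
    (L a + L d - L b - L c).
Proof.
  intros Ha Hb Hc Hd Habcd.
  set (e z K := L (INR K + z) - L (INR K) - z * ln (INR K)).
  apply is_lim_seq_ext with
    (u := fun K => e c K - e d K - e a K + e b K - (L c - L d - L a + L b)).
  { intros K. rewrite ssum_plus, !ssum_minus.
    pose proof (L_sum a K Ha). pose proof (L_sum b K Hb).
    pose proof (L_sum c K Hc). pose proof (L_sum d K Hd).
    unfold e. rewrite !(Rplus_comm (INR K)).
    assert (Hz : forall u v : R, u - v = - ((c - d - a + b) * ln (INR K)) -> u = v).
    { intros u v Huv. rewrite Habcd, Rmult_0_l in Huv. lra. }
    apply Hz. rewrite H, H0, H1, H2. ring. }
  replace (L a + L d - L b - L c) with (0 - 0 - 0 + 0 - (L c - L d - L a + L b)) by ring.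
  apply is_lim_seq_minus'; [|apply is_lim_seq_const].
  apply is_lim_seq_plus'; [|apply asym; auto].
  apply is_lim_seq_minus'; [|apply asym; auto].
  apply is_lim_seq_minus'; apply asym; auto.
Qed.

Lemma ssum_S f n : ssum f (S n) = ssum f n + f n.
Proof. reflexivity. Qed.

Definition Hs (N : nat) (x : R) := ssum (fun k => / (x + INR k)) N.
Definition vseq x n := ln (x + INR n + 1) - Hs (S n) x.
Definition useq x n := ln (x + INR n) - Hs (S n) x.
Definition gdig x := real (Lim_seq (vseq x)).

Lemma vseq_cv x : 0 < x -> is_lim_seq (vseq x) (gdig x).
Proof.
  intros Hx.
  destruct (ex_lim_seq_adj (useq x) (vseq x)) as [_ [Hv _]].
  - intros n. unfold useq, Hs. rewrite !ssum_S. rewrite S_INR.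
    pose proof (ln_diff_bounds (x + INR n) ltac:(pose proof (pos_INR n); lra)) as [H1 _].
    replace (x + (INR n + 1)) with (x + INR n + 1) by ring. lra.
  - intros n. unfold vseq, Hs. rewrite !ssum_S. rewrite !S_INR.
    pose proof (ln_diff_bounds (x + INR n + 1) ltac:(pose proof (pos_INR n); lra)) as [_ H1].
    replace (x + (INR n + 1) + 1) with (x + INR n + 1 + 1) by ring.
    replace (x + (INR n + 1)) with (x + INR n + 1) by ring. lra.
  - apply is_lim_seq_ext with (u := fun n => ln (INR n + (x + 1)) - ln (INR n + x)).
    + intros n. unfold vseq, useq. replace (INR n + (x + 1)) with (x + INR n + 1) by ring.
      rewrite (Rplus_comm (INR n)). ring.
    + apply lnshift.
  - unfold gdig. pose proof (Lim_seq_correct' _ Hv) as H.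
    destruct Hv as [l Hl]. rewrite (is_lim_seq_unique _ _ Hl) in H |- *. exact H.
Qed.

Lemma phi_der N x : 0 < x ->
  is_derive (fun y => ssum (fun k => ln (y + INR k)) N) x (Hs N x).
Proof.
  intros Hx. induction N.
  - simpl. unfold Hs; simpl. apply (is_derive_const (K:=R_AbsRing) (V:=R_NormedModule) 0 x).
  - unfold Hs; simpl.
    apply (is_derive_plus (K:=R_AbsRing) (V:=R_NormedModule)
      (fun y => ssum (fun k => ln (y + INR k)) N) (fun y => ln (y + INR N))).
    exact IHN. auto_derive. pose proof (pos_INR N); lra. field.
    pose proof (pos_INR N); lra.
Qed.

Lemma L_deriv x : 0 < x -> is_derive L x (gdig x).
Proof.
  intros Hx. apply is_derive_Reals. intros eps Heps.
  assert (He3 : 0 < eps / 3) by lra.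
  set (e3 := mkposreal _ He3).
  pose proof (proj2 (is_lim_seq_spec _ _) (vseq_cv x Hx) e3) as Ev1.
  pose proof (proj2 (is_lim_seq_spec _ _) (lnshift (x + 2) (x + 1)) e3) as Ev2.
  pose proof (proj2 (is_lim_seq_spec _ _) (lnshift (x + 1) (x - 1)) e3) as Ev3.
  pose proof (ev_big 1) as Ev4.
  destruct (filter_and _ _ Ev1 (filter_and _ _ Ev2 (filter_and _ _ Ev3 Ev4))) as [N0 HN0].
  destruct (HN0 N0 (le_n _)) as [C1 [C2 [C3 C4]]].
  set (n := N0) in *. simpl in C1, C2, C3.
  rewrite Rminus_0_r in C2, C3.
  set (N := S n).
  assert (HN : INR N = INR n + 1) by (unfold N; apply S_INR).
  set (phi := fun y => ssum (fun k => ln (y + INR k)) N).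
  pose proof (proj1 (is_derive_Reals _ _ _) (phi_der N x Hx) (eps / 3) He3) as [d1 Hd1].
  assert (Hd : 0 < Rmin d1 (Rmin 1 (x / 2))).
  { apply Rmin_pos. apply cond_pos. apply Rmin_pos; lra. }
  exists (mkposreal _ Hd). intros h Hh0 Hh. simpl in Hh.
  pose proof (Rmin_l d1 (Rmin 1 (x / 2))). pose proof (Rmin_r d1 (Rmin 1 (x / 2))).
  pose proof (Rmin_l 1 (x / 2)). pose proof (Rmin_r 1 (x / 2)).
  assert (Hh1 : Rabs h < d1) by lra.
  assert (Hh' : Rabs h < 1) by lra. assert (Hh'' : Rabs h < x / 2) by lra.
  apply Rabs_def2 in Hh'. apply Rabs_def2 in Hh''.
  specialize (Hd1 h Hh0 Hh1).
  assert (Hxh : 0 < x + h) by lra.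
  pose proof (L_sum (x + h) N Hxh) as E1. pose proof (L_sum x N Hx) as E2.
  fold (phi (x + h)) in E1. fold (phi x) in E2.
  set (S := (L (x + h + INR N) - L (x + INR N)) / h).
  assert (HQ : (L (x + h) - L x) / h = S - (phi (x + h) - phi x) / h).
  { unfold S. field_simplify; auto. rewrite E1, E2. field. auto. }
  assert (HS : ln (x + INR n - 1) <= S <= ln (x + INR n + 2)).
  { destruct (Rlt_le_dec 0 h).
    - pose proof (slope_bounds (x + INR N) (x + h + INR N) ltac:(lra) ltac:(lra)) as [B1 B2].
      replace (x + h + INR N - (x + INR N)) with h in B1, B2 by ring.
      fold S in B1, B2. split.
      + eapply Rle_trans; [|exact B1]. apply ln_le; lra.
      + eapply Rle_trans; [exact B2|]. apply ln_le; lra.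
    - assert (h < 0) by (destruct (Req_dec h 0); [contradiction|lra]).
      pose proof (slope_bounds (x + h + INR N) (x + INR N) ltac:(lra) ltac:(lra)) as [B1 B2].
      replace ((L (x + INR N) - L (x + h + INR N)) / (x + INR N - (x + h + INR N))) with S in B1, B2
        by (unfold S; field; lra).
      split.
      + eapply Rle_trans; [|exact B1]. apply ln_le; lra.
      + eapply Rle_trans; [exact B2|]. apply ln_le; lra. }
  rewrite HQ.
  unfold vseq in C1. fold N in C1.
  replace (INR n + (x + 2)) with (x + INR n + 2) in C2 by ring.
  replace (INR n + (x + 1)) with (x + INR n + 1) in C2, C3 by ring.
  replace (INR n + (x - 1)) with (x + INR n - 1) in C3 by ring.
  apply Rabs_def2 in C1. apply Rabs_def2 in C2. apply Rabs_def2 in C3. apply Rabs_def2 in Hd1.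
  simpl in C1, C2, C3.
  unfold phi in *. destruct C1, C2, C3, Hd1, HS. apply Rabs_def1; lra.
Qed.

Lemma digamma_eq x : 0 < x -> digamma x = gdig x.
Proof.
  intros Hx. unfold digamma.
  assert (Hd : is_derive Gamma x (gdig x * Gamma x)).
  { apply (is_derive_ext_loc (fun y => exp (L y))).
    - assert (Hp : 0 < x / 2) by lra. exists (mkposreal _ Hp). intros y Hy.
      change (Rabs (y - x) < x / 2) in Hy. apply Rabs_def2 in Hy.
      unfold L. apply exp_ln. apply Gamma_pos. lra.
    - replace (Gamma x) with (exp (L x)) by (unfold L; apply exp_ln, Gamma_pos; auto).
      apply (is_derive_comp exp L x (exp (L x)) (gdig x)).
      + auto_derive. auto. ring.
      + apply L_deriv; auto. }
  rewrite (is_derive_unique _ _ _ Hd). field. apply Rgt_not_eq, Gamma_pos; auto.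
Qed.

Lemma ser_lim (a : nat -> R) (l : R) : is_series a l <-> is_lim_seq (sum_n a) l.
Proof. split; intros H; exact H. Qed.

Definition X (q j K : nat) :=
  ssum (fun m => gamma_coef (2 * q * m + j) - gamma_coef (2 * q * m + q + j)) K.

Lemma gc_eq (n : nat) (s u : R) : 0 < s -> 0 < u -> INR n = s * u ->
  gamma_coef n = / s * / u - (ln (u + / s) - ln u).
Proof.
  intros Hs Hu Hn. unfold gamma_coef.
  rewrite plus_INR, Hn. simpl INR.
  replace ((s * u + 1) / (s * u)) with ((u + / s) / u) by (field; lra).
  rewrite ln_div. rewrite Rinv_mult. ring.
  assert (0 < / s) by (apply Rinv_0_lt_compat; lra). lra. lra.
Qed.

Lemma Xlim q j : (0 < q)%nat -> (1 <= j)%nat ->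
  is_lim_seq (X q j) (D_jq j q + E_jq j q).
Proof.
  intros Hq Hj.
  set (Q := INR q).
  assert (HQ : 0 < Q) by (apply lt_0_INR; lia).
  assert (HJ : 1 <= INR j) by (apply (le_INR 1); lia).
  set (a := INR (j + 1) / (2 * Q)). set (b := INR j / (2 * Q)).
  set (c := INR (j + q + 1) / (2 * Q)). set (d := INR (j + q) / (2 * Q)).
  assert (Ea : a = b + / (2 * Q)) by (unfold a, b; rewrite plus_INR; simpl; field; lra).
  assert (Ed : d = b + / 2) by (unfold d, b; rewrite plus_INR; fold Q; field; lra).
  assert (Ec : c = d + / (2 * Q)) by (unfold c, d; rewrite (plus_INR (j + q)); simpl; field; lra).
  assert (Hb : 0 < b) by (unfold b; apply Rdiv_lt_0_compat; lra).
  assert (H2Q : 0 < / (2 * Q)) by (apply Rinv_0_lt_compat; lra).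
  assert (Ha : 0 < a) by lra. assert (Hd : 0 < d) by lra. assert (Hc : 0 < c) by lra.
  apply is_lim_seq_ext with
    (u := fun K => / (2 * Q) * (Hs K b - Hs K d) +
                   ssum (fun m => ln (c + INR m) - ln (d + INR m) - ln (a + INR m) + ln (b + INR m)) K).
  { intros K. unfold X, Hs. rewrite <- ssum_minus, <- ssum_scal, <- ssum_plus.
    apply ssum_ext. intros m.
    pose proof (pos_INR m).
    assert (I1 : INR (2 * q * m + j) = 2 * Q * (b + INR m)).
    { rewrite plus_INR, !mult_INR. fold Q. unfold b. simpl. field. lra. }
    assert (I2 : INR (2 * q * m + q + j) = 2 * Q * (d + INR m)).
    { rewrite !plus_INR, !mult_INR. fold Q. unfold d. rewrite plus_INR. fold Q. simpl. field. lra. }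
    rewrite (gc_eq _ (2 * Q) (b + INR m) ltac:(lra) ltac:(lra) I1).
    rewrite (gc_eq _ (2 * Q) (d + INR m) ltac:(lra) ltac:(lra) I2).
    replace (b + INR m + / (2 * Q)) with (a + INR m) by lra.
    replace (d + INR m + / (2 * Q)) with (c + INR m) by lra.
    ring. }
  unfold D_jq, E_jq. fold Q. fold a b c d.
  replace (/ 2 + b) with d by lra.
  rewrite !digamma_eq by lra.
  assert (EE : ln (Gamma a * Gamma d / (Gamma b * Gamma c)) = L a + L d - L b - L c).
  { pose proof (Gamma_pos a Ha). pose proof (Gamma_pos b Hb).
    pose proof (Gamma_pos c Hc). pose proof (Gamma_pos d Hd).
    unfold L. rewrite ln_div, !ln_mult; try ring; try nra. }
  rewrite EE.
  apply is_lim_seq_plus'.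
  - apply is_lim_seq_scal_l with (a := / (2 * Q)) (lu := gdig d - gdig b).
    apply is_lim_seq_incr_1.
    apply is_lim_seq_ext with
      (u := fun n => (vseq d n - vseq b n) + (ln (INR n + (b + 1)) - ln (INR n + (d + 1)))).
    { intros n. unfold vseq. rewrite !(Rplus_comm (INR n)). ring_simplify. 
      replace (b + 1 + INR n) with (b + INR n + 1) by ring.
      replace (d + 1 + INR n) with (d + INR n + 1) by ring. ring. }
    replace (gdig d - gdig b) with ((gdig d - gdig b) + 0) by ring.
    apply is_lim_seq_plus'. apply is_lim_seq_minus'; apply vseq_cv; auto.
    apply lnshift.
  - apply Elim; auto. lra.
Qed.

Lemma gc_bounds n : (1 <= n)%nat -> 0 <= gamma_coef n <= / INR n - / (INR n + 1).
Proof.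
  intros Hn. assert (H1 : 1 <= INR n) by (apply (le_INR 1); auto).
  unfold gamma_coef. rewrite plus_INR, ln_div by (simpl; lra). simpl INR.
  pose proof (ln_diff_bounds (INR n) ltac:(lra)) as [B1 B2].
  assert (/ (INR n + 1) <= / INR n) by (apply Rinv_le_contravar; lra).
  split; lra.
Qed.

Lemma tele_series : is_series (fun k => / (INR k + 1) - / (INR k + 2)) 1.
Proof.
  apply ser_lim.
  apply is_lim_seq_ext with (u := fun n => 1 - / (INR n + 2)).
  { intros n. induction n.
    - rewrite sum_O. simpl. field.
    - rewrite sum_Sn, <- IHn. change plus with Rplus. rewrite S_INR. field.
      pose proof (pos_INR n). split; lra. }
  apply is_lim_seq_spec. intros eps.
  assert (He : 0 < eps) by (destruct eps; auto).
  generalize (ev_big (/ eps)). apply filter_imp. intros n Hn.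
  pose proof (pos_INR n).
  assert (0 < / (INR n + 2)) by (apply Rinv_0_lt_compat; lra).
  replace (1 - / (INR n + 2) - 1) with (- / (INR n + 2)) by ring.
  rewrite Rabs_Ropp, Rabs_pos_eq by lra.
  apply Rmult_lt_reg_r with (INR n + 2). lra.
  rewrite Rinv_l by lra.
  apply Rmult_lt_compat_l with (r := eps) in Hn; auto.
  rewrite Rinv_r in Hn by lra. nra.
Qed.

Lemma ssum_add f n m : ssum f (n + m) = ssum f n + ssum (fun i => f (n + i)%nat) m.
Proof.
  induction m. simpl. rewrite Nat.add_0_r. ring.
  rewrite Nat.add_succ_r. simpl. rewrite IHm. ring.
Qed.

Lemma sum_n_ssum (f : nat -> R) n : sum_n f n = ssum f (S n).
Proof.
  induction n. rewrite sum_O. simpl. ring.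
  rewrite sum_Sn, IHn. reflexivity.
Qed.

Lemma ssum_lim (F : nat -> nat -> R) (lim : nat -> R) m :
  (forall r, (r < m)%nat -> is_lim_seq (fun K => F r K) (lim r)) ->
  is_lim_seq (fun K => ssum (fun r => F r K) m) (ssum lim m).
Proof.
  induction m; intros H.
  - simpl. apply is_lim_seq_const.
  - simpl. apply is_lim_seq_plus'. apply IHm. intros; apply H; lia. apply H; lia.
Qed.

Lemma ssum_zero n : ssum (fun _ => 0) n = 0.
Proof. induction n; simpl; auto. rewrite IHn; ring. Qed.

Section Main.
Variable w : nat -> R.
Variable q : nat.
Hypothesis Hq : (0 < q)%nat.
Hypothesis Hw : forall k, w (k + q)%nat = - w k.
Hypothesis Hwb : forall k, Rabs (w k) <= 1.

Lemma w_per K i : w (2 * q * K + i)%nat = w i.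
Proof.
  induction K.
  - f_equal. lia.
  - replace (2 * q * S K + i)%nat with ((2 * q * K + i + q) + q)%nat by lia.
    rewrite !Hw. rewrite IHK. ring.
Qed.

Lemma block K : ssum (fun k => w k * gamma_coef (S k)) (2 * q * K) =
                ssum (fun r => w r * X q (S r) K) q.
Proof.
  induction K.
  - replace (2 * q * 0)%nat with 0%nat by lia. simpl.
    rewrite (ssum_ext _ (fun _ => 0)). rewrite ssum_zero; auto.
    intros r. unfold X. simpl. ring.
  - replace (2 * q * S K)%nat with (2 * q * K + (q + q))%nat by lia.
    rewrite ssum_add, ssum_add, IHK.
    rewrite (ssum_ext (fun r => w r * X q (S r) (S K))
       (fun r => w r * X q (S r) K + (w r * gamma_coef (2 * q * K + S r) +
                                      - w r * gamma_coef (2 * q * K + q + S r)))).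
    2:{ intros r. unfold X. rewrite ssum_S. ring. }
    rewrite ssum_plus, ssum_plus. f_equal. f_equal.
    + apply ssum_ext. intros i. rewrite w_per. f_equal. f_equal. lia.
    + apply ssum_ext. intros i.
      replace (2 * q * K + (q + i))%nat with ((2 * q * K + i) + q)%nat by lia.
      rewrite Hw, w_per. f_equal. f_equal. lia.
Qed.

Lemma main_real :
  is_series (fun k => w k * gamma_coef (S k))
    (sum_n (fun r => w r * (D_jq (S r) q + E_jq (S r) q)) (q - 1)).
Proof.
  set (a := fun k => w k * gamma_coef (S k)).
  assert (Hex : ex_series a).
  { apply ex_series_Rabs.
    apply (ex_series_le (V:=R_CompleteNormedModule) _ (fun k => / (INR k + 1) - / (INR k + 2))).
    - intros n. change (Rabs (Rabs (a n)) <= / (INR n + 1) - / (INR n + 2)).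
      rewrite Rabs_Rabsolu. unfold a. rewrite Rabs_mult.
      pose proof (gc_bounds (S n) ltac:(lia)) as [G1 G2].
      rewrite S_INR in G2. replace (INR n + 1 + 1) with (INR n + 2) in G2 by ring.
      rewrite (Rabs_pos_eq (gamma_coef (S n))) by auto.
      pose proof (Hwb n). pose proof (Rabs_pos (w n)). nra.
    - exists 1. apply tele_series. }
  destruct Hex as [l Hl].
  set (T := fun K => ssum (fun r => w r * X q (S r) K) q).
  set (tgt := ssum (fun r => w r * (D_jq (S r) q + E_jq (S r) q)) q).
  assert (HT : is_lim_seq T tgt).
  { apply ssum_lim. intros r Hr.
    pose proof (is_lim_seq_scal_l _ (w r) _ (Xlim q (S r) Hq ltac:(lia))) as H.
    simpl in H. exact H. }
  assert (HT2 : is_lim_seq T l).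
  { apply is_lim_seq_incr_1.
    assert (Hl' := proj1 (ser_lim a l) Hl).
    assert (Hphi : filterlim (fun K => pred (2 * q * S K)) eventually eventually).
    { apply eventually_subseq; intros n; lia. }
    pose proof (is_lim_seq_subseq _ _ _ Hphi Hl') as H.
    apply is_lim_seq_ext with (2 := H). intros K. simpl.
    rewrite sum_n_ssum. unfold T. rewrite <- block. f_equal. lia. }
  assert (E : l = tgt).
  { apply is_lim_seq_unique in HT. apply is_lim_seq_unique in HT2.
    rewrite HT in HT2. injection HT2. auto. }
  replace (sum_n (fun r => w r * (D_jq (S r) q + E_jq (S r) q)) (q - 1)) with tgt.
  rewrite <- E. exact Hl.
  rewrite sum_n_ssum. unfold tgt. f_equal. lia.
Qed.
End Main.

Lemma per_Z (f : R -> R) (Hper : forall x k, f (x + 2 * INR k * PI) = f x) x m :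
  f (x + 2 * IZR m * PI) = f x.
Proof.
  destruct (Z_le_gt_dec 0 m).
  - rewrite <- (Z2Nat.id m) by auto. rewrite <- INR_IZR_INZ. apply Hper.
  - assert (E : (- m)%Z = Z.of_nat (Z.to_nat (- m))) by (rewrite Z2Nat.id; lia).
    set (y := x + 2 * IZR m * PI).
    rewrite <- (Hper y (Z.to_nat (- m))). f_equal.
    unfold y. rewrite INR_IZR_INZ, <- E, opp_IZR. ring.
Qed.

Lemma odd_shift (f : R -> R) (Hper : forall x k, f (x + 2 * INR k * PI) = f x)
  (Hneg : forall x, f (x + PI) = - f x) p x :
  Z.odd p = true -> f (x + PI * IZR p) = - f x.
Proof.
  intros Hp. apply Z.odd_spec in Hp. destruct Hp as [m ->].
  rewrite plus_IZR, mult_IZR.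
  replace (x + PI * (IZR 2 * IZR m + IZR 1)) with ((x + PI) + 2 * IZR m * PI) by (simpl; ring).
  rewrite per_Z by auto. apply Hneg.
Qed.

Lemma pow_omega (th : R) k :
  pow_n (K := C_Ring) ((cos th, sin th) : C) k = (cos (INR k * th), sin (INR k * th)).
Proof.
  induction k.
  - simpl. rewrite Rmult_0_l, cos_0, sin_0. reflexivity.
  - change (pow_n (K := C_Ring) ((cos th, sin th) : C) (S k))
      with (Cmult (cos th, sin th) (pow_n (K := C_Ring) ((cos th, sin th) : C) k)).
    rewrite IHk. rewrite S_INR.
    replace ((INR k + 1) * th) with (th + INR k * th) by ring.
    rewrite cos_plus, sin_plus. unfold Cmult. simpl. f_equal; ring.
Qed.

Lemma sum_n_C (f : nat -> C) n :
  sum_n (G := C_AbelianMonoid) f n = (sum_n (fun k => fst (f k)) n, sum_n (fun k => snd (f k)) n).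
Proof.
  induction n.
  - rewrite !sum_O. destruct (f 0%nat); reflexivity.
  - rewrite !sum_Sn, IHn. reflexivity.
Qed.

Lemma is_series_C (u v : nat -> R) (U V : R) :
  is_series u U -> is_series v V ->
  is_series (K := C_AbsRing) (V := C_NormedModule) (fun k => ((u k, v k) : C)) ((U, V) : C).
Proof.
  intros Hu Hv. unfold is_series.
  apply filterlim_locally. intros eps.
  pose proof (proj1 (filterlim_locally _ _) Hu eps) as Hu'.
  pose proof (proj1 (filterlim_locally _ _) Hv eps) as Hv'.
  generalize (filter_and _ _ Hu' Hv'). apply filter_imp. intros n [H1 H2].
  rewrite sum_n_C. simpl. split; auto.
Qed.

Theorem corollary31 (p : Z) (q : nat) :
  Z.odd p = true -> (0 < q)%nat ->
  is_series (gamma_term (omega p (Z.of_nat q)))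
    (sum_n (G := C_AbelianMonoid)
       (fun k => Cmult (pow_n (K := C_Ring) (omega p (Z.of_nat q)) k)
                       (RtoC (D_jq (S k) q + E_jq (S k) q)))
       (q - 1)).
Proof.
  intros Hp Hq.
  set (th := PI * IZR p / IZR (Z.of_nat q)).
  assert (Hom : omega p (Z.of_nat q) = ((cos th, sin th) : C)) by reflexivity.
  assert (HQ : 0 < INR q) by (apply lt_0_INR; lia).
  assert (Hqth : forall k, INR (k + q) * th = INR k * th + PI * IZR p).
  { intros k. rewrite plus_INR. unfold th. rewrite <- INR_IZR_INZ. field. lra. }
  set (w1 := fun k => cos (INR k * th)). set (w2 := fun k => sin (INR k * th)).
  assert (M1 := main_real w1 q Hq
    ltac:(intros k; unfold w1; rewrite Hqth; apply odd_shift; auto; [apply cos_period|apply neg_cos])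
    ltac:(intros k; unfold w1; apply Rabs_le; apply COS_bound)).
  assert (M2 := main_real w2 q Hq
    ltac:(intros k; unfold w2; rewrite Hqth; apply odd_shift; auto; [apply sin_period|apply neg_sin])
    ltac:(intros k; unfold w2; apply Rabs_le; apply SIN_bound)).
  pose proof (is_series_C _ _ _ _ M1 M2) as HC.
  rewrite Hom.
  rewrite sum_n_C.
  match goal with |- is_series _ ?T => replace T with
    ((sum_n (fun r : nat => w1 r * (D_jq (S r) q + E_jq (S r) q)) (q - 1),
      sum_n (fun r : nat => w2 r * (D_jq (S r) q + E_jq (S r) q)) (q - 1)) : C) end.
  2:{ f_equal; apply sum_n_ext; intros n; rewrite pow_omega; unfold Cmult, RtoC; simpl;
      unfold w1, w2; ring. }
  eapply is_series_ext; [|exact HC].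
  intros n. unfold gamma_term. rewrite pow_omega. unfold Cmult, RtoC. simpl.
  unfold w1, w2. f_equal; ring.
Qed.
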